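(* For all integers $m,n\ge2$, the (unnormalized) diagonal positive matrices in $M_m(\mathbb{C})\otimes M_n(\mathbb{C})$ $$\rho_1=\operatorname{diag}(\sqrt2+1,\sqrt2+1,1,\dots,1),\qquad \rho_2=\operatorname{diag}(2,2,2,1,\dots,1)$$ are absolutely PPT; that is, for every unitary $U$ of order $mn$, both $(U\rho_1U^\dagger)^\Gamma\ge0$ and $(U\rho_2U^\dagger)^\Gamma\ge0$.
   Context: The partial transpose is $M^\Gamma:=(T\otimes\mathrm{id})(M)$ with $T$ the transpose on the first factor $M_m(\mathbb{C})$. A (possibly unnormalized) positive semidefinite matrix $\rho$ is absolutely PPT if $(U\rho U^\dagger)^\Gamma$ is positive semidefinite for every global unitary $U$ on $\mathbb{C}^m\otimes\mathbb{C}^n$. *)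

(* Defs.v *)
(* Complex scalars: an arbitrary numClosedFieldType C
   (algebraically closed field with conjugation and order, e.g. the complex numbers). *)
From HB Require Import structures.
From mathcomp Require Import all_boot all_order all_algebra.
Set Implicit Arguments. Unset Strict Implicit. Unset Printing Implicit Defensive.
Import Order.TTheory GRing.Theory Num.Theory.
Local Open Scope ring_scope.

Definition adjmx (C : numClosedFieldType) (p q : nat) (M : 'M[C]_(p, q)) : 'M[C]_(q, p) :=
  map_mx Num.conj (M^T).

Definition psdmx (C : numClosedFieldType) (N : nat) (M : 'M[C]_N) : Prop :=
  adjmx M = M /\ forall v : 'cV[C]_N, 0 <= (adjmx v *m M *m v) 0 0.

(* identification C^m (x) C^n = C^(m*n): the basis vector e_i (x) f_k has
   index mxvec_index i k (MathComp's standard row-major pairing). *)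
Definition tpair (m n : nat) (a : 'I_(m * n)) : 'I_m * 'I_n :=
  enum_val (cast_ord (esym (mxvec_cast m n)) a).

(* partial transpose on the first factor M_m(C):
   (M^Gamma)_{(i,k),(j,l)} = M_{(j,k),(i,l)} *)
Definition ptrans (C : numClosedFieldType) (m n : nat) (M : 'M[C]_(m * n)) : 'M[C]_(m * n) :=
  \matrix_(a, b) M (mxvec_index (tpair b).1 (tpair a).2)
                   (mxvec_index (tpair a).1 (tpair b).2).

Definition absPPT (C : numClosedFieldType) (m n : nat) (rho : 'M[C]_(m * n)) : Prop :=
  psdmx rho /\
  forall U : 'M[C]_(m * n), U *m adjmx U = 1%:M ->
    psdmx (ptrans (U *m rho *m adjmx U)).

Definition rho1 (C : numClosedFieldType) (N : nat) : 'M[C]_N :=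
  diag_mx (\row_(a < N) if (a < 2)%N then sqrtC 2 + 1 else 1).
Definition rho2 (C : numClosedFieldType) (N : nat) : 'M[C]_N :=
  diag_mx (\row_(a < N) if (a < 3)%N then 2 else 1).

(* Main.v *)
Require Import Defs.
From HB Require Import structures.
From mathcomp Require Import all_boot all_order all_algebra.
From mathcomp Require Import ring zify.

Set Implicit Arguments. Unset Strict Implicit. Unset Printing Implicit Defensive.
Import Order.TTheory GRing.Theory Num.Theory.
Local Open Scope ring_scope.

Section Idx.
Variables m n : nat.

Lemma tpairK (i : 'I_m) (k : 'I_n) : tpair (mxvec_index i k) = (i, k).
Proof. by rewrite /tpair /mxvec_index cast_ordK enum_rankK. Qed.

Lemma tpairV (a : 'I_(m * n)) : mxvec_index (tpair a).1 (tpair a).2 = a.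
Proof. by case/mxvec_indexP: a => i k; rewrite tpairK. Qed.

Lemma tpair_inj : injective (@tpair m n).
Proof. by move=> a b e; rewrite -(tpairV a) -(tpairV b) e. Qed.

Lemma sum_idx (R : nmodType) (F : 'I_(m * n) -> R) :
  \sum_a F a = \sum_i \sum_k F (mxvec_index i k).
Proof.
rewrite pair_big /= (reindex (fun p : 'I_m * 'I_n => mxvec_index p.1 p.2)) //=.
exists (@tpair m n) => [[i k] _ | a _] /=; first by rewrite tpairK.
exact: tpairV.
Qed.
End Idx.

Set Implicit Arguments. Unset Strict Implicit. Unset Printing Implicit Defensive.
Import Order.TTheory GRing.Theory Num.Theory.
Local Open Scope ring_scope.

Section Herm.
Variable C : numClosedFieldType.

Lemma adjmxE p q (M : 'M[C]_(p, q)) i j : adjmx M i j = (M j i)^*.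
Proof. by rewrite !mxE. Qed.

Lemma adjmxM p q r (A : 'M[C]_(p, q)) (B : 'M[C]_(q, r)) :
  adjmx (A *m B) = adjmx B *m adjmx A.
Proof. by rewrite /adjmx trmx_mul map_mxM. Qed.

Lemma adjmxK p q (A : 'M[C]_(p, q)) : adjmx (adjmx A) = A.
Proof. by apply/matrixP => i j; rewrite !mxE conjCK. Qed.

Lemma formE N (v : 'cV[C]_N) (M : 'M[C]_N) :
  (adjmx v *m M *m v) 0 0 = \sum_a \sum_b (v a 0)^* * M a b * v b 0.
Proof.
rewrite exchange_big mxE; apply: eq_bigr => b _; rewrite mxE big_distrl /=.
by apply: eq_bigr => a _; rewrite !mxE.
Qed.

Lemma ptrans_herm m n (M : 'M[C]_(m * n)) :
  adjmx M = M -> adjmx (ptrans M) = ptrans M.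
Proof.
move=> hM; apply/matrixP => a b; rewrite adjmxE !mxE.
by rewrite -[in RHS]hM adjmxE.
Qed.

Lemma diag_herm N (d : 'rV[C]_N) : (forall i, (d 0 i)^* = d 0 i) ->
  adjmx (diag_mx d) = diag_mx d.
Proof.
move=> hd; apply/matrixP => i j; rewrite adjmxE !mxE.
by case: (eqVneq i j) => [->|ne]; rewrite ?mulr1n ?hd ?mulr0n ?conjC0.
Qed.

Lemma conj_herm N (U : 'M[C]_N) (H : 'M[C]_N) : adjmx H = H ->
  adjmx (U *m H *m adjmx U) = U *m H *m adjmx U.
Proof. by move=> hH; rewrite !adjmxM adjmxK hH mulmxA. Qed.

Lemma diag_psd N (d : 'rV[C]_N) : (forall i, 0 <= d 0 i) -> psdmx (diag_mx d).
Proof.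
move=> hd; split.
  by apply: diag_herm => i; rewrite geC0_conj.
move=> v; rewrite formE; apply: sumr_ge0 => a _.
rewrite (bigD1 a) //= big1 => [|b ba]; last by rewrite !mxE eq_sym (negPf ba) mulr0n mulr0 mul0r.
rewrite addr0 !mxE eqxx mulr1n mulrAC -normCKC.
by apply: mulr_ge0 => //; apply: exprn_ge0.
Qed.

End Herm.

Set Implicit Arguments. Unset Strict Implicit. Unset Printing Implicit Defensive.
Import Order.TTheory GRing.Theory Num.Theory.
Local Open Scope ring_scope.

Section LP.
Variable C : numClosedFieldType.

Lemma ex_maxr (J : finType) (Q : pred J) (g : J -> C) j0 :
  Q j0 -> (forall j, Q j -> g j \is Num.real) ->
  exists2 j, Q j & forall j', Q j' -> g j' <= g j.
Proof.
move=> Qj0 hr.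
pose cnt j := #|[pred j' | Q j' && (g j < g j')]|.
case: (arg_minnP cnt Qj0) => j Qj jmin.
exists j => // j' Qj'.
rewrite real_leNgt ?hr //; apply/negP => lt.
have := jmin j' Qj'; apply/negP; rewrite -ltnNge.
rewrite /cnt; apply: proper_card; apply/properP; split.
  by apply/subsetP => x; rewrite !inE => /andP[Qx lt']; rewrite Qx (lt_trans lt lt').
by exists j'; rewrite !inE ?Qj' ?lt ?ltxx.
Qed.

Lemma ex_minr (J : finType) (Q : pred J) (g : J -> C) j0 :
  Q j0 -> (forall j, Q j -> g j \is Num.real) ->
  exists2 j, Q j & forall j', Q j' -> g j <= g j'.
Proof.
move=> Qj0 hr.
have hr' j : Q j -> - g j \is Num.real by move=> Qj; rewrite rpredN; apply: hr.
have [j Qj hj] := ex_maxr (g := fun j => - g j) Qj0 hr'.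
by exists j => // j' /hj; rewrite lerN2.
Qed.

Lemma topk (I : finType) (D : {set I}) (w P : I -> C) (K : nat) (B : C) :
  (0 < K)%N ->
  (forall e, e \in D -> 0 <= w e) ->
  (forall e, e \in D -> 0 <= P e /\ P e <= 1) ->
  \sum_(e in D) P e <= K%:R ->
  (forall S : {set I}, S \subset D -> (#|S| <= K)%N -> \sum_(e in S) w e <= B) ->
  \sum_(e in D) w e * P e <= B.
Proof.
move=> K0 w0 P01 sumP claim.
pose Q := fun S : {set I} => (S \subset D) && (#|S| <= K)%N.
have Q0 : Q set0 by rewrite /Q sub0set cards0.
have Qr S : Q S -> \sum_(e in S) w e \is Num.real.
  case/andP => SD _; apply: ger0_real; apply: sumr_ge0 => e eS; apply: w0; exact: (subsetP SD).
have [S /andP[SD cS] Smax] := ex_maxr Q0 Qr.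
have wS e : e \in S -> 0 <= w e by move=> eS; apply: w0; apply: (subsetP SD).
have PS e : e \in S -> 0 <= P e /\ P e <= 1 by move=> eS; apply: P01; apply: (subsetP SD).
have [lam [lam0 [lamout [lamin lamK]]]] : exists lam : C, 0 <= lam /\
   (forall e, e \in D -> e \notin S -> w e <= lam) /\
   (forall f, f \in S -> lam <= w f) /\
   lam * (K%:R - \sum_(e in S) P e) <= \sum_(e in S) lam * (1 - P e).
  case: (ltnP #|S| K) => [ltK | geK].
    exists 0; split => //; split; last split.
    + move=> e eD eS.
      have := Smax (e |: S); rewrite /Q subUset sub1set eD SD cardsU1 eS /= add1n ltK => /(_ isT).
      by rewrite big_setU1 //= gerDr.
    + by move=> f fS; apply: wS.
    + by rewrite mul0r big1 ?lexx // => e _; rewrite mul0r.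
  have eK : #|S| = K by apply/eqP; rewrite eqn_leq cS geK.
  have [f0 f0S f0min] : exists2 f0, f0 \in S & forall f, f \in S -> w f0 <= w f.
    have : (0 < #|S|)%N by rewrite eK.
    rewrite card_gt0 => /set0Pn [x xS].
    by apply: (ex_minr (Q := fun f => f \in S) xS) => f fS; apply: ger0_real; apply: wS.
  exists (w f0); split; first exact: wS.
  split; last split.
  + move=> e eD eS.
    have eS' : e \notin S :\ f0 by rewrite !inE negb_and eS orbT.
    have := Smax (e |: (S :\ f0)).
    rewrite /Q subUset sub1set eD (subset_trans (subD1set S f0) SD) cardsU1 eS'.
    rewrite /= add1n -eK (cardsD1 f0 S) f0S /= => /(_ (leqnn _)).
    rewrite big_setU1 //= (big_setD1 f0 f0S) /=.
    by rewrite lerD2r.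
  + exact: f0min.
  + by rewrite -eK -sumr_const -sumrB mulr_sumr lexx.
have -> : \sum_(e in D) w e * P e = \sum_(e in S) w e * P e + \sum_(e in D :\: S) w e * P e.
  by rewrite (big_setID S) /= (setIidPr SD).
rewrite (big_setID S) /= (setIidPr SD) in sumP.
have h1 : \sum_(e in D :\: S) w e * P e <= lam * \sum_(e in D :\: S) P e.
  rewrite mulr_sumr; apply: ler_sum => e; rewrite inE => /andP[eS eD].
  by apply: ler_wpM2r; [case: (P01 e eD) | apply: lamout].
have h2 : lam * \sum_(e in D :\: S) P e <= lam * (K%:R - \sum_(e in S) P e).
  by apply: ler_wpM2l => //; rewrite lerBrDl.
apply: le_trans (claim S SD cS).
have -> : \sum_(e in S) w e = \sum_(e in S) w e * P e + (\sum_(e in S) w e - \sum_(e in S) w e * P e).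
  by rewrite addrC subrK.
rewrite lerD2l; apply: le_trans h1 _; apply: le_trans h2 _; apply: le_trans lamK _.
rewrite -sumrB; apply: ler_sum => e eS.
rewrite -[X in _ <= X - _]mulr1 -mulrBr; apply: ler_wpM2r; first by rewrite subr_ge0; case: (PS e eS).
exact: lamin.
Qed.
End LP.

Set Implicit Arguments. Unset Strict Implicit. Unset Printing Implicit Defensive.
Import Order.TTheory GRing.Theory Num.Theory.
Local Open Scope ring_scope.

Section Graph.
Variable C : numClosedFieldType.

Lemma sqr_real_ge0 (x : C) : x \is Num.real -> 0 <= x ^+ 2.
Proof. by rewrite realEsqr. Qed.

Lemma amgm_t (a b t : C) : 0 <= a -> 0 <= b -> 0 < t ->
  a * b <= (t * a ^+ 2 + b ^+ 2 / t) / 2.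
Proof.
move=> a0 b0 t0.
have tn0 : t != 0 by rewrite gt_eqF.
rewrite -subr_ge0.
have -> : (t * a ^+ 2 + b ^+ 2 / t) / 2 - a * b = (t * a - b) ^+ 2 / (2 * t).
  by field; exact: tn0.
apply: divr_ge0; last by rewrite mulr_ge0 // ltW.
apply: sqr_real_ge0; apply: rpredB; apply: ger0_real => //.
by rewrite mulr_ge0 // ltW.
Qed.

Lemma amgm (a b : C) : 0 <= a -> 0 <= b -> a * b <= (a ^+ 2 + b ^+ 2) / 2.
Proof. by move=> a0 b0; have := amgm_t a0 b0 ltr01; rewrite mul1r divr1. Qed.

Lemma sum_subset_le (I : finType) (A B : {set I}) (F : I -> C) :
  A \subset B -> (forall i, i \in B -> 0 <= F i) ->
  \sum_(i in A) F i <= \sum_(i in B) F i.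
Proof.
move=> AB F0; rewrite [X in _ <= X](big_setID A) /= (setIidPr AB) lerDl.
by apply: sumr_ge0 => i; rewrite inE => /andP[_ iB]; apply: F0.
Qed.

Variable n : nat.
Variable sg : 'I_n -> C.
Hypothesis sg0 : forall j, 0 <= sg j.
Definition ssum := \sum_j sg j ^+ 2.
Definition Dpairs := [set e : 'I_n * 'I_n | (e.1 < e.2)%N].
Definition wgt (e : 'I_n * 'I_n) := sg e.1 * sg e.2.
Definition deg (S : {set 'I_n * 'I_n}) j :=
  (#|[set e in S | e.1 == j]| + #|[set e in S | e.2 == j]|)%N.

Lemma sum_fst (S : {set 'I_n * 'I_n}) (f : 'I_n -> C) (g : 'I_n * 'I_n -> 'I_n) :
  \sum_(e in S) f (g e) = \sum_j f j *+ #|[set e in S | g e == j]|.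
Proof.
rewrite (partition_big g xpredT) //=; apply: eq_bigr => j _.
rewrite -sumr_const; apply: eq_big => [e|e]; first by rewrite inE.
by case/andP => _ /eqP ->.
Qed.

Lemma deg_bound (S : {set 'I_n * 'I_n}) : \sum_(e in S) wgt e <= \sum_j sg j ^+ 2 *+ deg S j / 2.
Proof.
have h : \sum_(e in S) wgt e <= \sum_(e in S) (sg e.1 ^+ 2 + sg e.2 ^+ 2) / 2.
  by apply: ler_sum => e _; apply: amgm.
apply: le_trans h _.
rewrite -mulr_suml big_split /=.
rewrite (sum_fst S (fun j => sg j ^+ 2) (fun e => e.1)).
rewrite (sum_fst S (fun j => sg j ^+ 2) (fun e => e.2)).
by rewrite -big_split mulr_suml; apply: ler_sum => j _; rewrite /deg mulrnDr.
Qed.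

Lemma deg_bound_D (S : {set 'I_n * 'I_n}) (Dg : nat) : (forall j, (deg S j <= Dg)%N) ->
  \sum_(e in S) wgt e <= Dg%:R / 2 * ssum.
Proof.
move=> hD; apply: le_trans (deg_bound S) _.
rewrite /ssum mulr_sumr; apply: ler_sum => j _.
rewrite -mulr_natr -mulrA [X in _ <= X]mulrC; apply: ler_wpM2l; first by apply: exprn_ge0.
by apply: ler_wpM2r; [rewrite invr_ge0 ler0n | rewrite ler_nat].
Qed.

Lemma deg_card (S : {set 'I_n * 'I_n}) c : S \subset Dpairs ->
  deg S c = #|[set e in S | (e.1 == c) || (e.2 == c)]|.
Proof.
move=> SD; rewrite /deg.
have -> : [set e in S | (e.1 == c) || (e.2 == c)] =
   [set e in S | e.1 == c] :|: [set e in S | e.2 == c].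
  by apply/setP => e; rewrite !inE andb_orr.
rewrite cardsU.
suff -> : [set e in S | e.1 == c] :&: [set e in S | e.2 == c] = set0 by rewrite cards0 subn0.
apply/setP => e; rewrite !inE.
apply/negP => /andP[/andP[eS /eqP e1]] /andP[_ /eqP e2].
by have := subsetP SD e eS; rewrite inE e1 e2 ltnn.
Qed.

Lemma deg_le (S : {set 'I_n * 'I_n}) c : S \subset Dpairs -> (deg S c <= #|S|)%N.
Proof.
move=> SD; rewrite deg_card //; apply: subset_leq_card.
by apply/subsetP => e; rewrite inE => /andP[].
Qed.

Lemma deg_full (S : {set 'I_n * 'I_n}) c : S \subset Dpairs -> (#|S| <= deg S c)%N ->
  forall e, e \in S -> (e.1 == c) || (e.2 == c).
Proof.
move=> SD; rewrite deg_card // => hc.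
have : [set e in S | (e.1 == c) || (e.2 == c)] == S.
  rewrite eqEcard hc andbT; by apply/subsetP => e; rewrite inE => /andP[].
by move=> /eqP <- e; rewrite inE => /andP[].
Qed.

Definition oth c (e : 'I_n * 'I_n) := if e.1 == c then e.2 else e.1.

Lemma star_bound (S : {set 'I_n * 'I_n}) c (t : C) : S \subset Dpairs -> 0 < t ->
  (forall e, e \in S -> (e.1 == c) || (e.2 == c)) ->
  \sum_(e in S) wgt e <= #|S|%:R * t / 2 * sg c ^+ 2 + (ssum - sg c ^+ 2) / (2 * t).
Proof.
move=> SD t0 hS.
have e1 e : e \in S -> wgt e = sg c * sg (oth c e).
  move=> eS; rewrite /wgt /oth; have := hS e eS.
  by case: eqP => [-> //|_] /= /eqP ->; rewrite mulrC.
have h : \sum_(e in S) wgt e <= \sum_(e in S) (t * sg c ^+ 2 + sg (oth c e) ^+ 2 / t) / 2.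
  by apply: ler_sum => e eS; rewrite e1 //; apply: amgm_t.
apply: le_trans h _.
have inj : {in S &, injective (oth c)}.
  move=> [a1 a2] [f1 f2] eS fS.
  have := hS _ eS; have := hS _ fS; have := subsetP SD _ eS; have := subsetP SD _ fS.
  rewrite !inE /oth /=.
  case: (eqVneq a1 c) => [->|ne1]; case: (eqVneq f1 c) => [->|nf1] /=.
  - by move=> _ _ _ _ ->.
  - move=> lf le /eqP f2c _ eq; subst; exfalso; move: lf le; lia.
  - move=> lf le _ /eqP e2c eq; subst; exfalso; move: lf le; lia.
  - by move=> _ _ /eqP f2c /eqP e2c ->; rewrite f2c e2c.
have hsum : \sum_(e in S) sg (oth c e) ^+ 2 <= ssum - sg c ^+ 2.
  rewrite -(big_imset (fun j => sg j ^+ 2) inj) /=.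
  have -> : ssum - sg c ^+ 2 = \sum_(j in [set j | j != c]) sg j ^+ 2.
    by rewrite /ssum (bigD1 c) //= addrC addrK; apply: eq_bigl => j; rewrite inE.
  apply: sum_subset_le => [|j _]; last by apply: exprn_ge0.
  apply/subsetP => j /imsetP [e eS ->]; rewrite inE /oth.
  have := subsetP SD _ eS; have := hS _ eS; rewrite inE.
  by case: eqP => [-> _ /= |ne /= /eqP <-]; rewrite ?neq_ltn => ->; rewrite ?orbT.
rewrite -mulr_suml big_split /= sumr_const -mulr_suml.
have tn0 : t != 0 by rewrite gt_eqF.
have -> : (t * sg c ^+ 2 *+ #|S| + (\sum_(i in S) sg (oth c i) ^+ 2) / t) / 2 =
   #|S|%:R * t / 2 * sg c ^+ 2 + (\sum_(i in S) sg (oth c i) ^+ 2) / (2 * t).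
  by rewrite -mulr_natr; field; exact: tn0.
rewrite lerD2l; apply: ler_wpM2r => //.
by rewrite invr_ge0 mulr_ge0 // ltW.
Qed.
End Graph.

Set Implicit Arguments. Unset Strict Implicit. Unset Printing Implicit Defensive.
Import Order.TTheory GRing.Theory Num.Theory.
Local Open Scope ring_scope.

Section Claims.
Variable C : numClosedFieldType.
Variable n : nat.
Variable sg : 'I_n -> C.
Hypothesis sg0 : forall j, 0 <= sg j.

Lemma ssum_ge c : sg c ^+ 2 <= ssum sg.
Proof.
rewrite /ssum (bigD1 c) //= lerDl; apply: sumr_ge0 => j _; exact: exprn_ge0.
Qed.

Lemma claim3 (S : {set 'I_n * 'I_n}) : S \subset Dpairs n -> (#|S| <= 3)%N ->
  \sum_(e in S) wgt sg e <= ssum sg.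
Proof.
move=> SD S3.
case: (boolP [forall j, (deg S j <= 2)%N]) => [/forallP h | /forallPn [c hc]].
  by apply: le_trans (deg_bound_D sg0 h) _; rewrite divff ?mul1r // pnatr_eq0.
have dc : (3 <= deg S c)%N by rewrite ltnNge.
have Sc : #|S| = 3%N by apply/eqP; rewrite eqn_leq S3 (leq_trans dc) // deg_le.
have full := deg_full SD (leq_trans S3 dc).
have t0 : 0 < 2 / 3 :> C by rewrite divr_gt0 // ltr0n.
apply: le_trans (star_bound sg0 SD t0 full) _.
rewrite Sc.
have h := ssum_ge c.
set x := sg c ^+ 2 in h *; set s := ssum sg in h *.
have -> : 3%:R * (2 / 3) / 2 * x + (s - x) / (2 * (2 / 3)) = s - (s - x) / 4.
  by field.
rewrite lerBlDr lerDl; apply: divr_ge0; [by rewrite subr_ge0 | by rewrite ler0n].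
Qed.

Lemma sqrt2_gt0 : 0 < sqrtC 2 :> C.
Proof. by rewrite sqrtC_gt0 ltr0n. Qed.

Lemma sqrt2_le2 : sqrtC 2 <= 2 :> C.
Proof.
rewrite -{2}(@sqrCK C 2) ?ler0n // ler_sqrtC ?qualifE /= ?ler0n ?exprn_ge0 //.
by rewrite -natrX ler_nat.
Qed.

Lemma claim2 (S : {set 'I_n * 'I_n}) : S \subset Dpairs n -> (#|S| <= 2)%N ->
  sqrtC 2 * \sum_(e in S) wgt sg e <= ssum sg.
Proof.
move=> SD S2.
have r0 := sqrt2_gt0.
have s0 : 0 <= ssum sg by rewrite /ssum; apply: sumr_ge0 => j _; exact: exprn_ge0.
case: (boolP [forall j, (deg S j <= 1)%N]) => [/forallP h | /forallPn [c hc]].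
  have := deg_bound_D sg0 h => hb.
  apply: le_trans (ler_wpM2l (ltW r0) hb) _.
  rewrite mulrA -{2}[ssum sg]mul1r; apply: ler_wpM2r => //.
  by rewrite mul1r ler_pdivrMr ?ltr0n // mul1r sqrt2_le2.
have dc : (2 <= deg S c)%N by rewrite ltnNge.
have Sc : #|S| = 2%N by apply/eqP; rewrite eqn_leq S2 (leq_trans dc) // deg_le.
have full := deg_full SD (leq_trans S2 dc).
have t0 : 0 < sqrtC 2 / 2 :> C by rewrite divr_gt0 // ltr0n.
apply: le_trans (ler_wpM2l (ltW r0) (star_bound sg0 SD t0 full)) _.
rewrite Sc.
set x := sg c ^+ 2; set s := ssum sg; set r := sqrtC 2.
have rn0 : r != 0 by rewrite gt_eqF.
have -> : r * (2%:R * (r / 2) / 2 * x + (s - x) / (2 * (r / 2))) = r ^+ 2 / 2 * x + (s - x).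
  by field; exact: rn0.
by rewrite /r sqrtCK divff ?pnatr_eq0 // mul1r addrC subrK.
Qed.
End Claims.

Set Implicit Arguments. Unset Strict Implicit. Unset Printing Implicit Defensive.
Import Order.TTheory GRing.Theory Num.Theory.
Local Open Scope ring_scope.

Section Dot.
Variables (C : numClosedFieldType) (p q : nat).
Definition dot (X Y : 'M[C]_(p, q)) : C := \sum_i \sum_j X i j * (Y i j)^*.

Lemma dotC X Y : dot X Y = (dot Y X)^*.
Proof.
rewrite /dot rmorph_sum; apply: eq_bigr => i _; rewrite rmorph_sum.
by apply: eq_bigr => j _; rewrite rmorphM /= conjCK mulrC.
Qed.

Lemma dotDl X Y Z : dot (X + Y) Z = dot X Z + dot Y Z.
Proof.
rewrite /dot -big_split; apply: eq_bigr => i _; rewrite -big_split.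
by apply: eq_bigr => j _; rewrite mxE mulrDl.
Qed.

Lemma dotNl X Z : dot (- X) Z = - dot X Z.
Proof.
rewrite /dot -sumrN; apply: eq_bigr => i _; rewrite -sumrN.
by apply: eq_bigr => j _; rewrite mxE mulNr.
Qed.

Lemma dotBl X Y Z : dot (X - Y) Z = dot X Z - dot Y Z.
Proof. by rewrite dotDl dotNl. Qed.

Lemma dotZl a X Z : dot (a *: X) Z = a * dot X Z.
Proof.
rewrite /dot mulr_sumr; apply: eq_bigr => i _; rewrite mulr_sumr.
by apply: eq_bigr => j _; rewrite mxE mulrA.
Qed.

Lemma dot_suml (I : finType) (P : pred I) (F : I -> 'M[C]_(p, q)) Z :
  dot (\sum_(i | P i) F i) Z = \sum_(i | P i) dot (F i) Z.
Proof.
elim/big_rec2: _ => [|i y1 y2 _ <-]; first last. by rewrite dotDl.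
by rewrite /dot big1 // => i _; rewrite big1 // => j _; rewrite mxE mul0r.
Qed.

Lemma dotBr X Y Z : dot X (Y - Z) = dot X Y - dot X Z.
Proof. by rewrite dotC dotBl rmorphB /= -!dotC. Qed.

Lemma dotZr a X Z : dot X (a *: Z) = a^* * dot X Z.
Proof. by rewrite dotC dotZl rmorphM /= -dotC. Qed.

Lemma dot_sumr (I : finType) (P : pred I) (F : I -> 'M[C]_(p, q)) Z :
  dot Z (\sum_(i | P i) F i) = \sum_(i | P i) dot Z (F i).
Proof. by rewrite dotC dot_suml rmorph_sum /=; apply: eq_bigr => i _; rewrite -dotC. Qed.

Lemma dot_ge0 X : 0 <= dot X X.
Proof.
apply: sumr_ge0 => i _; apply: sumr_ge0 => j _; rewrite -normCK; exact: exprn_ge0.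
Qed.

Lemma bessel (I : finType) (P : pred I) (E : I -> 'M[C]_(p, q)) X :
  (forall i j, P i -> P j -> i != j -> dot (E i) (E j) = 0) ->
  (forall i, P i -> dot (E i) (E i) <= 1) ->
  \sum_(i | P i) `|dot X (E i)| ^+ 2 <= dot X X.
Proof.
move=> orth nrm.
pose c i := dot X (E i).
pose Y := X - \sum_(i | P i) c i *: E i.
have hXS : dot X (\sum_(i | P i) c i *: E i) = \sum_(i | P i) `|c i| ^+ 2.
  rewrite dot_sumr; apply: eq_bigr => i _; rewrite dotZr normCK mulrC //.
have hSX : dot (\sum_(i | P i) c i *: E i) X = \sum_(i | P i) `|c i| ^+ 2.
  rewrite dotC hXS rmorph_sum /=; apply: eq_bigr => i _.
  by rewrite geC0_conj // exprn_ge0.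
have hSS : dot (\sum_(i | P i) c i *: E i) (\sum_(i | P i) c i *: E i) =
    \sum_(i | P i) `|c i| ^+ 2 * dot (E i) (E i).
  rewrite dot_suml; apply: eq_bigr => i Pi.
  rewrite dotZl dot_sumr (bigD1 i) //= big1 ?addr0 => [|j /andP[Pj ji]].
    by rewrite dotZr mulrA normCK.
  by rewrite dotZr orth // ?mulr0 // eq_sym.
have hY : dot Y Y = dot X X - 2%:R * \sum_(i | P i) `|c i| ^+ 2 +
    \sum_(i | P i) `|c i| ^+ 2 * dot (E i) (E i).
  by rewrite /Y dotBl !dotBr hXS hSX hSS; ring.
have := dot_ge0 Y; rewrite hY => h.
have h2 : \sum_(i | P i) `|c i| ^+ 2 * dot (E i) (E i) <= \sum_(i | P i) `|c i| ^+ 2.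
  apply: ler_sum => i Pi; rewrite -[X in _ <= X]mulr1; apply: ler_wpM2l.
    exact: exprn_ge0.
  exact: nrm.
rewrite -subr_ge0; apply: le_trans h _.
have -> : dot X X - \sum_(i | P i) `|c i| ^+ 2 = dot X X - 2%:R * \sum_(i | P i) `|c i| ^+ 2 +
   \sum_(i | P i) `|c i| ^+ 2 by ring.
by rewrite lerD2l.
Qed.
End Dot.

Set Implicit Arguments. Unset Strict Implicit. Unset Printing Implicit Defensive.
Import Order.TTheory GRing.Theory Num.Theory.
Local Open Scope ring_scope.

Section Pairs.
Variables (C : numClosedFieldType) (n : nat).

Lemma sum_Dpairs (F : 'I_n * 'I_n -> C) :
  \sum_(e in Dpairs n) F e = \sum_(p : 'I_n) \sum_(q : 'I_n | (p < q)%N) F (p, q).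
Proof.
rewrite pair_big_dep /=; apply: eq_big => [[p q]|[p q] _] //=; by rewrite inE.
Qed.

Lemma split_pairs (T : 'I_n -> 'I_n -> C) :
  \sum_q \sum_p T q p = \sum_p T p p + \sum_(e in Dpairs n) (T e.1 e.2 + T e.2 e.1).
Proof.
have row q : \sum_p T q p = T q q + \sum_(p : 'I_n | (q < p)%N) T q p + \sum_(p : 'I_n | (p < q)%N) T q p.
  rewrite (bigD1 q) //= (bigID (fun p : 'I_n => (q < p)%N)) /= addrA; congr (_ + _ + _).
    by apply: eq_bigl => p; case: (eqVneq p q) => [->|]; rewrite ?ltnn.
  apply: eq_bigl => p; case: (eqVneq p q) => [->|ne]; rewrite ?ltnn //=.
  by rewrite -leqNgt ltn_neqAle val_eqE ne.
rewrite (eq_bigr _ (fun q _ => row q)) !big_split /= -addrA; congr (_ + _).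
rewrite sum_Dpairs /=; congr (_ + _).
rewrite sum_Dpairs /= (exchange_big_dep xpredT) //=.
Qed.

Lemma cross_id (x y : C) :
  x * y^* + y * x^* = `|x + y| ^+ 2 / 2 - `|y - x| ^+ 2 / 2.
Proof. by rewrite !normCK !rmorphD !rmorphN /=; field. Qed.

Lemma paral (x y : C) : `|x - y| ^+ 2 <= 2%:R * (`|x| ^+ 2 + `|y| ^+ 2).
Proof.
have -> : 2%:R * (`|x| ^+ 2 + `|y| ^+ 2) = `|x - y| ^+ 2 + `|x + y| ^+ 2.
  by rewrite !normCK !rmorphD !rmorphN /=; ring.
by rewrite lerDl exprn_ge0.
Qed.

Lemma lower_bound (sg : 'I_n -> C) (sg0 : forall j, 0 <= sg j) (g : 'I_n -> 'I_n -> C) :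
  - \sum_(e in Dpairs n) wgt sg e * (`|g e.2 e.1 - g e.1 e.2| ^+ 2 / 2)
  <= \sum_q \sum_p sg q * sg p * g q p * (g p q)^*.
Proof.
rewrite split_pairs -[X in X <= _]add0r; apply: lerD.
  apply: sumr_ge0 => p _; rewrite -mulrA -normCK; apply: mulr_ge0; last exact: exprn_ge0.
  exact: mulr_ge0.
rewrite -sumrN; apply: ler_sum => e _.
have -> : sg e.1 * sg e.2 * g e.1 e.2 * (g e.2 e.1)^* + sg e.2 * sg e.1 * g e.2 e.1 * (g e.1 e.2)^*
   = wgt sg e * (g e.1 e.2 * (g e.2 e.1)^* + g e.2 e.1 * (g e.1 e.2)^*) by rewrite /wgt; ring.
rewrite cross_id -mulrN; apply: ler_wpM2l; first by rewrite /wgt mulr_ge0.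
rewrite addrC lerDr.
by apply: divr_ge0; [exact: exprn_ge0 | rewrite ler0n].
Qed.
End Pairs.

Set Implicit Arguments. Unset Strict Implicit. Unset Printing Implicit Defensive.
Import Order.TTheory GRing.Theory Num.Theory.
Local Open Scope ring_scope.

Section Main.
Variables (C : numClosedFieldType) (m n : nat).
Variable U : 'M[C]_(m * n).
Hypothesis hU : U *m adjmx U = 1%:M.
Variable v : 'cV[C]_(m * n).

Definition Fc (c : 'I_(m * n)) : C :=
  \sum_a \sum_b (v a 0)^* * (U (mxvec_index (tpair b).1 (tpair a).2) c *
     (U (mxvec_index (tpair a).1 (tpair b).2) c)^*) * v b 0.

Lemma form_decomp (r : 'rV[C]_(m * n)) :
  (adjmx v *m ptrans (U *m diag_mx r *m adjmx U) *m v) 0 0 = \sum_c r 0 c * Fc c.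
Proof.
have E x y : (U *m diag_mx r *m adjmx U) x y = \sum_c r 0 c * (U x c * (U y c)^*).
  by rewrite mxE; apply: eq_bigr => c _; rewrite mul_mx_diag !mxE; ring.
rewrite formE /Fc.
under eq_bigr => a _ do under eq_bigr => b _ do
  rewrite [ptrans _ a b]mxE E big_distrr big_distrl /=.
under [RHS]eq_bigr => c _ do rewrite big_distrr /=.
under [RHS]eq_bigr => c _ do under eq_bigr => a _ do rewrite big_distrr /=.
rewrite [RHS]exchange_big /=; apply: eq_bigr => a _.
rewrite [RHS]exchange_big /=; apply: eq_bigr => b _.
by apply: eq_bigr => c _; ring.
Qed.

Lemma ptrans1 : ptrans (1%:M : 'M[C]_(m * n)) = 1%:M.
Proof.
apply/matrixP => a b; rewrite !mxE; congr (_%:R); congr (nat_of_bool _).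
apply/eqP/eqP => [h|->]; last by [].
have := congr1 (@tpair m n) h; rewrite !tpairK => -[e1 e2].
by apply: tpair_inj; rewrite [tpair a]surjective_pairing [tpair b]surjective_pairing e1 e2.
Qed.

Lemma sumF : \sum_c Fc c = \sum_a (v a 0)^* * v a 0.
Proof.
have := form_decomp (const_mx 1); rewrite diag_const_mx mulmx1 hU ptrans1.
under [RHS]eq_bigr => c _ do rewrite mxE mul1r.
move=> <-; rewrite formE; apply: eq_bigr => a _.
rewrite (bigD1 a) //= big1 => [|b ba]; first by rewrite mxE eqxx mulr1 addr0.
by rewrite mxE eq_sym (negPf ba) mulr0 mul0r.
Qed.

Lemma tr_expand (A V : 'M[C]_(m, n)) :
  \tr (A *m adjmx V *m map_mx Num.conj A *m V^T) =
  \sum_i \sum_k \sum_j \sum_l (V i k)^* * (A j k * (A i l)^*) * V j l.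
Proof.
rewrite /mxtrace.
under eq_bigr => j _ do rewrite mxE; under eq_bigr => j _ do
  under eq_bigr => l _ do rewrite !mxE big_distrl /=.
under eq_bigr => j _ do under eq_bigr => l _ do
  under eq_bigr => i _ do rewrite !mxE big_distrl big_distrl /=.
under eq_bigr => j _ do rewrite exchange_big /=.
under eq_bigr => j _ do under eq_bigr => i _ do rewrite exchange_big /=.
rewrite exchange_big /=; apply: eq_bigr => i _.
rewrite exchange_big /=; apply: eq_bigr => k _.
apply: eq_bigr => j _; apply: eq_bigr => l _.
by rewrite !mxE; ring.
Qed.

Definition Vm : 'M[C]_(m, n) := \matrix_(i, k) v (mxvec_index i k) 0.
Definition Am c : 'M[C]_(m, n) := \matrix_(j, k) U (mxvec_index j k) c.

Lemma Fc_tr c : Fc c = \tr (Am c *m adjmx Vm *m map_mx Num.conj (Am c) *m Vm^T).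
Proof.
rewrite tr_expand /Fc sum_idx; apply: eq_bigr => i _; apply: eq_bigr => k _.
rewrite sum_idx; apply: eq_bigr => j _; apply: eq_bigr => l _.
by rewrite !tpairK /= !mxE.
Qed.

Definition Hm := adjmx Vm *m Vm.
Definition Pm := spectralmx Hm.

Lemma Pm_unit : Pm *m adjmx Pm = 1%:M.
Proof. exact: (unitarymxP (spectral_unitarymx Hm)). Qed.

Lemma Pm_unit' : adjmx Pm *m Pm = 1%:M.
Proof. exact: mulmx1C Pm_unit. Qed.

Definition Wm := Vm *m adjmx Pm.

Lemma VWP : Vm = Wm *m Pm.
Proof. by rewrite /Wm -mulmxA Pm_unit' mulmx1. Qed.

Lemma WW_diag : adjmx Wm *m Wm = diag_mx (spectral_diag Hm).
Proof.
have hH : adjmx Hm = Hm by rewrite /Hm adjmxM adjmxK.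
have nH : Hm \is normalmx by apply/normalmxP; rewrite -/(adjmx Hm) hH.
have := orthomx_spectralP nH; rewrite -/Pm invmx_unitary ?spectral_unitarymx // => eH.
set D := diag_mx (spectral_diag Hm) in eH *.
rewrite /Wm adjmxM adjmxK !mulmxA -(mulmxA _ (adjmx Vm)) -/Hm eH.
by rewrite -/(adjmx Pm) !mulmxA Pm_unit mul1mx -mulmxA Pm_unit mulmx1.
Qed.

Definition Bm c := Wm^T *m Am c *m adjmx Pm.

Lemma conj_adj p q (M : 'M[C]_(p, q)) : map_mx Num.conj (adjmx M) = M^T.
Proof. by apply/matrixP => i j; rewrite !mxE conjCK. Qed.

Lemma conj_tr p q (M : 'M[C]_(p, q)) : map_mx Num.conj (M^T) = adjmx M.
Proof. by []. Qed.

Lemma Fc_B c : Fc c = \tr (Bm c *m map_mx Num.conj (Bm c)).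
Proof.
rewrite Fc_tr VWP adjmxM trmx_mul !mulmxA mxtrace_mulC /Bm !map_mxM conj_adj conj_tr.
by rewrite !mulmxA.
Qed.

Lemma trBB (B : 'M[C]_n) : \tr (B *m map_mx Num.conj B) = \sum_q \sum_p B q p * (B p q)^*.
Proof. by apply: eq_bigr => q _; rewrite mxE; apply: eq_bigr => p _; rewrite mxE. Qed.

Definition dq q := (adjmx Wm *m Wm) q q.
Definition sig q := sqrtC (dq q).

Lemma dqE q : dq q = \sum_j `|Wm j q| ^+ 2.
Proof. by rewrite /dq mxE; apply: eq_bigr => j _; rewrite !mxE normCKC. Qed.

Lemma dq_ge0 q : 0 <= dq q.
Proof. by rewrite dqE; apply: sumr_ge0 => j _; apply: exprn_ge0. Qed.

Lemma sig_ge0 q : 0 <= sig q.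
Proof. by rewrite /sig sqrtC_ge0 dq_ge0. Qed.

Lemma sigK q : sig q ^+ 2 = dq q.
Proof. exact: sqrtCK. Qed.

Lemma WW_off q q' : q != q' -> (adjmx Wm *m Wm) q q' = 0.
Proof. by move=> ne; rewrite WW_diag !mxE (negPf ne) mulr0n. Qed.

Definition Em q p : 'M[C]_(m, n) := \matrix_(j, r) ((Wm j q)^* * Pm p r / sig q).
Definition gam c q p := dot (Am c) (Em q p).

Lemma sig_real q : (sig q)^* = sig q.
Proof. exact: geC0_conj (sig_ge0 q). Qed.

Lemma Bm_sum c q p : Bm c q p = \sum_j \sum_r Am c j r * Wm j q * (Pm p r)^*.
Proof.
rewrite /Bm mxE.
under eq_bigr => r _ do rewrite mxE big_distrl /=.
rewrite exchange_big /=; apply: eq_bigr => j _; apply: eq_bigr => r _.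
by rewrite !mxE; ring.
Qed.

Lemma B_gam c q p : Bm c q p = sig q * gam c q p.
Proof.
rewrite Bm_sum /gam /dot.
have [s0|sn0] := eqVneq (sig q) 0.
  have d0 : dq q = 0 by rewrite -sigK s0 expr0n.
  have W0 j : Wm j q = 0.
    move: d0; rewrite dqE => d0.
    have := psumr_eq0P (fun i _ => exprn_ge0 2 (normr_ge0 (Wm i q))) d0.
    by move=> /(_ j isT) /eqP; rewrite sqrf_eq0 normr_eq0 => /eqP.
  rewrite s0 mul0r; apply: big1 => j _; apply: big1 => r _; by rewrite W0 mulr0 mul0r.
rewrite mulr_sumr; apply: eq_bigr => j _; rewrite mulr_sumr; apply: eq_bigr => r _.
rewrite !mxE !rmorphM /= fmorphV /= conjCK sig_real; field; exact: sn0.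
Qed.

Lemma dotEm q p q' p' : dot (Em q p) (Em q' p') =
  (adjmx Wm *m Wm) q q' * (Pm *m adjmx Pm) p p' / (sig q * sig q').
Proof.
rewrite /dot [(adjmx Wm *m Wm) q q']mxE [(Pm *m adjmx Pm) p p']mxE big_distrl big_distrl /=.
apply: eq_bigr => j _; rewrite big_distrr big_distrl /=; apply: eq_bigr => r _.
by rewrite !mxE !rmorphM /= !fmorphV /= conjCK !sig_real invfM; ring.
Qed.

Lemma Em_orth (x y : 'I_n * 'I_n) : x != y -> dot (Em x.1 x.2) (Em y.1 y.2) = 0.
Proof.
case: x y => [q p] [q' p'] /=; rewrite xpair_eqE negb_and => /orP[ne|ne].
  by rewrite dotEm WW_off // !mul0r.
by rewrite dotEm Pm_unit [(1%:M : 'M_n) p p']mxE (negPf ne) mulr0n mulr0 mul0r.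
Qed.

Lemma Em_norm q p : dot (Em q p) (Em q p) <= 1.
Proof.
rewrite dotEm Pm_unit [(1%:M : 'M_n) p p]mxE eqxx mulr1 -expr2 sigK /dq.
case: (eqVneq ((adjmx Wm *m Wm) q q) 0) => [->|nz]; first by rewrite mul0r ler01.
by rewrite divff.
Qed.

Lemma Am_orth c c' : dot (Am c) (Am c') = (c == c')%:R.
Proof.
have hU' : adjmx U *m U = 1%:M by apply: mulmx1C.
have := congr1 (fun M : 'M[C]_(m * n) => M c' c) hU'; rewrite !mxE eq_sym => <-.
rewrite /dot.
under eq_bigr => j _ do under eq_bigr => r _ do rewrite !mxE.
by rewrite -(sum_idx (fun a => U a c * (U a c')^*)); apply: eq_bigr => a _; rewrite !mxE mulrC.
Qed.

Lemma Fc_gam c : Fc c = \sum_q \sum_p sig q * sig p * gam c q p * (gam c p q)^*.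
Proof.
rewrite Fc_B trBB; apply: eq_bigr => q _; apply: eq_bigr => p _.
by rewrite !B_gam rmorphM /= sig_real; ring.
Qed.

Lemma ssum_v : ssum sig = \sum_a (v a 0)^* * v a 0.
Proof.
have -> : ssum sig = \tr (adjmx Wm *m Wm).
  by rewrite /ssum /mxtrace; apply: eq_bigr => q _; rewrite sigK.
rewrite /Wm adjmxM adjmxK mulmxA mxtrace_mulC !mulmxA Pm_unit' mul1mx.
rewrite sum_idx /mxtrace [RHS]exchange_big /=; apply: eq_bigr => k _; rewrite mxE; apply: eq_bigr => i _.
by rewrite !mxE.
Qed.

Lemma dotN_norm (X Y : 'M[C]_(m, n)) : `|dot X Y| = `|dot Y X|.
Proof. by rewrite dotC norm_conjC. Qed.

Lemma Pv_le1 (k : nat) (e : 'I_n * 'I_n) : e \in Dpairs n ->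
  \sum_(c < m * n | (c < k)%N) `|gam c e.2 e.1 - gam c e.1 e.2| ^+ 2 <= 2%:R.
Proof.
rewrite inE => lt.
set Z := Em e.2 e.1 - Em e.1 e.2.
have ne : (e.2, e.1) != (e.1, e.2).
  by rewrite xpair_eqE negb_and; apply/orP; left; apply/eqP => h; move: lt; rewrite h ltnn.
have hZ : dot Z Z <= 2%:R.
  rewrite /Z dotBl !dotBr (Em_orth ne) (Em_orth (x := (e.1, e.2)) (y := (e.2, e.1))); last by rewrite eq_sym.
  rewrite sub0r opprK subr0 (natrD _ 1 1); apply: lerD; exact: Em_norm.
apply: le_trans hZ.
have h1 : forall i j : 'I_(m * n), (i < k)%N -> (j < k)%N -> i != j -> dot (Am i) (Am j) = 0.
  by move=> i j _ _ ij; rewrite Am_orth (negPf ij).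
have h2 : forall i : 'I_(m * n), (i < k)%N -> dot (Am i) (Am i) <= 1.
  by move=> i _; rewrite Am_orth eqxx.
have hB := bessel (P := fun c : 'I_(m * n) => (c < k)%N) Z h1 h2.
apply: le_trans hB; apply: ler_sum => c _.
by rewrite /gam -dotBr dotN_norm.
Qed.

Lemma Pv_sum (c : 'I_(m * n)) :
  \sum_(e in Dpairs n) `|gam c e.2 e.1 - gam c e.1 e.2| ^+ 2 <= 2%:R.
Proof.
have h0 : \sum_(e in Dpairs n) `|gam c e.2 e.1 - gam c e.1 e.2| ^+ 2 <=
    \sum_(e in Dpairs n) 2%:R * (`|gam c e.2 e.1| ^+ 2 + `|gam c e.1 e.2| ^+ 2).
  by apply: ler_sum => e _; apply: paral.
apply: le_trans h0 _.
rewrite -mulr_sumr -[X in _ <= X]mulr1; apply: ler_wpM2l; first by rewrite ler0n.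
have h1 : \sum_(e in Dpairs n) (`|gam c e.2 e.1| ^+ 2 + `|gam c e.1 e.2| ^+ 2) <=
    \sum_q \sum_p `|gam c q p| ^+ 2.
  rewrite (split_pairs (fun q p => `|gam c q p| ^+ 2)); apply: ler_wpDl.
    by apply: sumr_ge0 => p _; apply: exprn_ge0.
  by apply: ler_sum => e _; rewrite addrC.
apply: le_trans h1 _.
rewrite pair_big /=.
have := bessel (P := xpredT) (E := fun x : 'I_n * 'I_n => Em x.1 x.2) (Am c).
rewrite Am_orth eqxx; apply.
  by move=> x y _ _ xy; apply: Em_orth.
by move=> x _; apply: Em_norm.
Qed.

Lemma main_bound (k : nat) (coef B : C) :
  (0 < k)%N -> (k <= m * n)%N -> 0 <= coef -> coef * B <= ssum sig ->
  (forall S : {set 'I_n * 'I_n}, S \subset Dpairs n -> (#|S| <= k)%N ->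
     \sum_(e in S) wgt sig e <= B) ->
  0 <= \sum_c Fc c + coef * \sum_(c < m * n | (c < k)%N) Fc c.
Proof.
move=> k0 kN c0 cB claim.
pose X c (e : 'I_n * 'I_n) := `|gam c e.2 e.1 - gam c e.1 e.2| ^+ 2 / 2.
pose Pv e := \sum_(c < m * n | (c < k)%N) X c e.
have hlow : - \sum_(e in Dpairs n) wgt sig e * Pv e <= \sum_(c < m * n | (c < k)%N) Fc c.
  have hc c : - \sum_(e in Dpairs n) wgt sig e * X c e <= Fc c.
    by rewrite Fc_gam; apply: lower_bound; exact: sig_ge0.
  rewrite /Pv; under eq_bigr => e _ do rewrite big_distrr /=.
  rewrite exchange_big /= -sumrN; apply: ler_sum => c _; exact: hc.
have hP01 e : e \in Dpairs n -> 0 <= Pv e /\ Pv e <= 1.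
  move=> eD; rewrite /Pv /X -mulr_suml; split.
    by apply: divr_ge0; [apply: sumr_ge0 => c _; apply: exprn_ge0 | rewrite ler0n].
  by rewrite ler_pdivrMr ?ltr0n // mul1r; apply: Pv_le1.
have hsumP : \sum_(e in Dpairs n) Pv e <= k%:R.
  rewrite /Pv exchange_big /=.
  have -> : k%:R = \sum_(c < m * n | (c < k)%N) (1 : C).
    by rewrite (big_ord_narrow kN) sumr_const card_ord.
  apply: ler_sum => c _; rewrite /X -mulr_suml ler_pdivrMr ?ltr0n // mul1r.
  exact: Pv_sum.
have hw e : e \in Dpairs n -> 0 <= wgt sig e by move=> _; rewrite /wgt mulr_ge0 // sig_ge0.
have hT := topk k0 hw hP01 hsumP claim.
rewrite sumF -ssum_v.
have hs : 0 <= ssum sig - coef * B by rewrite subr_ge0.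
apply: le_trans hs _.
rewrite lerD2l -mulrN; apply: ler_wpM2l => //.
by apply: le_trans hlow; rewrite lerN2.
Qed.
End Main.

Set Implicit Arguments. Unset Strict Implicit. Unset Printing Implicit Defensive.
Import Order.TTheory GRing.Theory Num.Theory.
Local Open Scope ring_scope.

Lemma absPPT_gen (C : numClosedFieldType) (m n : nat) (r : 'rV[C]_(m * n)) (k : nat) (coef : C) :
  (0 < k)%N -> (k <= m * n)%N -> 0 <= coef ->
  (forall c, r 0 c = 1 + coef * (c < k)%N%:R) ->
  (forall sg : 'I_n -> C, (forall j, 0 <= sg j) -> exists B : C,
     coef * B <= ssum sg /\
     forall S : {set 'I_n * 'I_n}, S \subset Dpairs n -> (#|S| <= k)%N ->
       \sum_(e in S) wgt sg e <= B) ->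
  absPPT (diag_mx r).
Proof.
move=> k0 kN c0 hr H.
have r0 c : 0 <= r 0 c by rewrite hr; apply: addr_ge0 => //; apply: mulr_ge0 => //; apply: ler0n.
have rc c : (r 0 c)^* = r 0 c by apply: geC0_conj.
split; first exact: diag_psd.
move=> U hU; split.
  by apply: ptrans_herm; apply: conj_herm; apply: diag_herm.
move=> v; rewrite form_decomp.
have -> : \sum_c r 0 c * Fc U v c = \sum_c Fc U v c + coef * \sum_(c < m * n | (c < k)%N) Fc U v c.
  rewrite mulr_sumr [X in _ = _ + X]big_mkcond /= -big_split /=; apply: eq_bigr => c _.
  by rewrite hr; case: (c < k)%N; rewrite /= ?mulr1 ?mulr0 ?addr0 ?mul0r; ring.
have [B [cB claim]] := H _ (sig_ge0 v).
have h := main_bound (v := v) hU k0 kN c0 cB claim; exact: h.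
Qed.

Unset Implicit Arguments.
Close Scope ring_scope.

Theorem lemma7 (C : numClosedFieldType) (m n : nat) :
  (2 <= m)%N -> (2 <= n)%N ->
  absPPT (rho1 C (m * n)) /\ absPPT (rho2 C (m * n)).
Proof.
Local Open Scope ring_scope.
move=> m2 n2.
have mn4 : (4 <= m * n)%N by apply: (leq_mul m2 n2).
split.
  apply: (absPPT_gen (k := 2) (coef := sqrtC 2)) => //.
  - by apply: leq_trans mn4.
  - exact: ltW (sqrt2_gt0 C).
  - by move=> c; rewrite mxE; case: (c < 2)%N; rewrite /= ?mulr1 ?mulr0 ?addr0; ring.
  - move=> sg sg0; exists (ssum sg / sqrtC 2); split.
      by rewrite mulrC -mulrA mulVf ?mulr1 // gt_eqF // sqrt2_gt0.
    move=> S SD S2; rewrite ler_pdivlMr ?sqrt2_gt0 // mulrC.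
    exact: claim2.
apply: (absPPT_gen (k := 3) (coef := 1)) => //.
- by apply: leq_trans mn4.
- by move=> c; rewrite mxE; case: (c < 3)%N; rewrite /= ?mulr1 ?mulr0 ?addr0; ring.
- move=> sg sg0; exists (ssum sg); split; first by rewrite mul1r.
  move=> S SD S3; exact: claim3.
Qed.
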